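(* Let $T$ be an automorphism of a Lebesgue space $(X,\Sigma,\mu)$ and let $m\ge1$ be an integer. Then for every $g\in\mathcal{G}_0$ we have $h_\mu(g,T^m)\le m\,h_\mu(g,T)$.
   Context: $\mathcal{G}_0$ is the set of concave functions $g:[0,1]\to\mathbb{R}$ with $g(0)=\lim_{x\to0^+}g(x)=0$. For a measure-preserving $S$ and a finite measurable partition $\mathcal{P}$, let $\mathcal{P}_n^S=\bigvee_{i=0}^{n-1}S^{-i}\mathcal{P}$, $H(g,\mathcal{P})=\sum_{A\in\mathcal{P}}g(\mu(A))$, and $h_\mu(g,S,\mathcal{P})=\limsup_{n\to\infty}\frac1nH(g,\mathcal{P}_n^S)$. Finally, $h_\mu(g,S)=\sup_{\mathcal{P}\text{ finite}}h_\mu(g,S,\mathcal{P})$. *)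

(* Defs.v *)
From Stdlib Require Import Reals Lra Lia List Classical ClassicalEpsilon.
Import ListNotations.
Open Scope R_scope.

Inductive Rbar : Type := Fin (r : R) | PInf | MInf.

Definition Rbar_le (x y : Rbar) : Prop :=
  match x, y with
  | MInf, _ => True
  | _, PInf => True
  | Fin a, Fin b => a <= b
  | _, _ => False
  end.

Definition Rbar_opp (x : Rbar) : Rbar :=
  match x with Fin r => Fin (- r) | PInf => MInf | MInf => PInf end.

(* m * x for a natural number m (0 * x := 0) *)
Definition Rbar_nmul (m : nat) (x : Rbar) : Rbar :=
  match m with
  | O => Fin 0
  | S _ => match x with Fin r => Fin (INR m * r) | PInf => PInf | MInf => MInf end
  end.

Definition Rsup (E : R -> Prop) : Rbar :=
  match excluded_middle_informative (exists x, E x) with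
  | left ne =>
      match excluded_middle_informative (bound E) with
      | left b => Fin (proj1_sig (completeness E b ne))
      | right _ => PInf
      end
  | right _ => MInf
  end.

Definition Rbar_sup (E : Rbar -> Prop) : Rbar :=
  match excluded_middle_informative (E PInf) with
  | left _ => PInf
  | right _ => Rsup (fun r => E (Fin r))
  end.

Definition Rbar_inf (E : Rbar -> Prop) : Rbar :=
  Rbar_opp (Rbar_sup (fun x => E (Rbar_opp x))).

Definition limsup (u : nat -> R) : Rbar :=
  Rbar_inf (fun v => exists N : nat, v = Rsup (fun r => exists n, (N <= n)%nat /\ r = u n)).

Definition set_compl {X : Type} (A : X -> Prop) : X -> Prop := fun x => ~ A x.
Definition big_union {X : Type} (A : nat -> X -> Prop) : X -> Prop :=
  fun x => exists n, A n x.
Definition preimage {X Y : Type} (f : X -> Y) (A : Y -> Prop) : X -> Prop :=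
  fun x => A (f x).

Definition sigma_algebra {X : Type} (S : (X -> Prop) -> Prop) : Prop :=
  S (fun _ => True) /\
  (forall A, S A -> S (set_compl A)) /\
  (forall A : nat -> X -> Prop, (forall n, S (A n)) -> S (big_union A)).

Definition prob_measure {X : Type} (S : (X -> Prop) -> Prop) (mu : (X -> Prop) -> R) : Prop :=
  mu (fun _ => True) = 1 /\
  (forall A, S A -> 0 <= mu A) /\
  (forall A : nat -> X -> Prop,
      (forall n, S (A n)) ->
      (forall i j x, i <> j -> A i x -> A j x -> False) ->
      infinite_sum (fun n => mu (A n)) (mu (big_union A))).

Definition complete_measure {X : Type} (S : (X -> Prop) -> Prop) (mu : (X -> Prop) -> R) : Prop :=
  forall A B, S B -> mu B = 0 -> (forall x, A x -> B x) -> S A.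

Definition borel (A : R -> Prop) : Prop :=
  forall S : (R -> Prop) -> Prop, sigma_algebra S ->
    (forall a b, S (fun x => a < x < b)) -> S A.

(* B is measurable for the completion of the Borel measure nu, with measure v *)
Definition completion_value (nu : (R -> Prop) -> R) (B : R -> Prop) (v : R) : Prop :=
  exists B1 B2, borel B1 /\ borel B2 /\
    (forall x, B1 x -> B x) /\ (forall x, B x -> B2 x) /\ nu B1 = v /\ nu B2 = v.

Definition iso_mod0_to_completed_borel {X : Type} (S : (X -> Prop) -> Prop)
    (mu : (X -> Prop) -> R) (nu : (R -> Prop) -> R) : Prop :=
  exists (N : X -> Prop) (N' : R -> Prop) (phi : X -> R) (psi : R -> X),
    S N /\ mu N = 0 /\ completion_value nu N' 0 /\
    (forall x, ~ N x -> ~ N' (phi x) /\ psi (phi x) = x) /\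
    (forall y, ~ N' y -> ~ N (psi y) /\ phi (psi y) = y) /\
    (forall B v, completion_value nu B v -> S (preimage phi B) /\ mu (preimage phi B) = v) /\
    (forall A, S A -> completion_value nu (preimage psi A) (mu A)).

(* Lebesgue space = standard probability space: a complete probability space
   isomorphic mod 0 to the completion of a Borel probability measure on R. *)
Definition lebesgue_space {X : Type} (S : (X -> Prop) -> Prop) (mu : (X -> Prop) -> R) : Prop :=
  sigma_algebra S /\ prob_measure S mu /\ complete_measure S mu /\
  exists nu, prob_measure borel nu /\ iso_mod0_to_completed_borel S mu nu.

Definition measure_preserving {X : Type} (S : (X -> Prop) -> Prop) (mu : (X -> Prop) -> R)
    (f : X -> X) : Prop :=
  forall A, S A -> S (preimage f A) /\ mu (preimage f A) = mu A.

Definition automorphism {X : Type} (S : (X -> Prop) -> Prop) (mu : (X -> Prop) -> R)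
    (T : X -> X) : Prop :=
  exists Tinv : X -> X,
    (forall x, Tinv (T x) = x) /\ (forall x, T (Tinv x) = x) /\
    measure_preserving S mu T /\ measure_preserving S mu Tinv.

Fixpoint iter_fun {X : Type} (n : nat) (f : X -> X) (x : X) : X :=
  match n with O => x | S k => f (iter_fun k f x) end.

Definition in_G0 (g : R -> R) : Prop :=
  (forall x y t, 0 <= x <= 1 -> 0 <= y <= 1 -> 0 <= t <= 1 ->
     t * g x + (1 - t) * g y <= g (t * x + (1 - t) * y)) /\
  g 0 = 0 /\
  (forall eps, eps > 0 -> exists delta, delta > 0 /\
     forall x, 0 < x < delta -> x <= 1 -> Rabs (g x) < eps).

Definition finite_partition {X : Type} (S : (X -> Prop) -> Prop) (P : list (X -> Prop)) : Prop :=
  Forall S P /\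
  (forall x, exists A, In A P /\ A x) /\
  (forall i j x, (i < j < length P)%nat ->
     nth i P (fun _ => False) x -> nth j P (fun _ => False) x -> False).

Definition join {X : Type} (P Q : list (X -> Prop)) : list (X -> Prop) :=
  flat_map (fun A => map (fun B => fun x => A x /\ B x) Q) P.

(* P_n^S = \/_{i=0}^{n-1} S^{-i} P  (P_0 = trivial partition) *)
Fixpoint iter_join {X : Type} (T : X -> X) (P : list (X -> Prop)) (n : nat) : list (X -> Prop) :=
  match n with
  | O => [fun _ => True]
  | S k => join (iter_join T P k) (map (preimage (iter_fun k T)) P)
  end.

Definition Hg {X : Type} (g : R -> R) (mu : (X -> Prop) -> R) (P : list (X -> Prop)) : R :=
  fold_right (fun A acc => g (mu A) + acc) 0 P.

Definition hg_part {X : Type} (g : R -> R) (mu : (X -> Prop) -> R) (T : X -> X)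
    (P : list (X -> Prop)) : Rbar :=
  limsup (fun n => Hg g mu (iter_join T P n) / INR n).

Definition hg {X : Type} (S : (X -> Prop) -> Prop) (g : R -> R) (mu : (X -> Prop) -> R)
    (T : X -> X) : Rbar :=
  Rbar_sup (fun v => exists P, finite_partition S P /\ v = hg_part g mu T P).

(* Main.v *)
Require Import Defs.
From Stdlib Require Import Reals List Lra Lia Classical ClassicalEpsilon FunctionalExtensionality PropExtensionality.
Import ListNotations.
Open Scope R_scope.

Lemma Rbar_le_refl x : Rbar_le x x.
Proof. destruct x; simpl; auto; lra. Qed.

Lemma Rbar_le_trans x y z : Rbar_le x y -> Rbar_le y z -> Rbar_le x z.
Proof. destruct x, y, z; simpl; auto; try lra; tauto. Qed.

Lemma Rbar_opp_opp x : Rbar_opp (Rbar_opp x) = x.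
Proof. destruct x; simpl; auto; now rewrite Ropp_involutive. Qed.

Lemma Rbar_opp_le x y : Rbar_le x y -> Rbar_le (Rbar_opp y) (Rbar_opp x).
Proof. destruct x, y; simpl; auto; lra. Qed.

Lemma Rsup_ub E r : E r -> Rbar_le (Fin r) (Rsup E).
Proof.
  intro H. unfold Rsup.
  destruct (excluded_middle_informative (exists x, E x)) as [ne|ne].
  - destruct (excluded_middle_informative (bound E)) as [b|b]; simpl; auto.
    destruct (completeness E b ne) as [l Hl]; simpl. apply (proj1 Hl); auto.
  - exfalso; apply ne; eauto.
Qed.

Lemma Rsup_lub E u : (forall r, E r -> Rbar_le (Fin r) u) -> Rbar_le (Rsup E) u.
Proof.
  intro H. unfold Rsup.
  destruct (excluded_middle_informative (exists x, E x)) as [ne|ne].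
  - destruct ne as [r0 Hr0] eqn:Hne.
    destruct (excluded_middle_informative (bound E)) as [b|b].
    + destruct (completeness E b _) as [l Hl]; simpl. destruct Hl as [Hl1 Hl2].
      destruct u as [c| |]; simpl.
      * apply Hl2. intros r Hr. exact (H r Hr).
      * exact I.
      * exact (H r0 Hr0).
    + destruct u as [c| |]; simpl; auto.
      * apply b. exists c. intros r Hr. exact (H r Hr).
      * exact (H r0 Hr0).
  - simpl; auto.
Qed.

Lemma Rbar_sup_ub (E : Rbar -> Prop) x : E x -> Rbar_le x (Rbar_sup E).
Proof.
  intro H. unfold Rbar_sup.
  destruct (excluded_middle_informative (E PInf)) as [p|p].
  - destruct x; simpl; auto.
  - destruct x as [r| |]; simpl; auto.
    + apply Rsup_ub; auto.
    + contradiction.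
Qed.

Lemma Rbar_sup_lub (E : Rbar -> Prop) u : (forall x, E x -> Rbar_le x u) -> Rbar_le (Rbar_sup E) u.
Proof.
  intro H. unfold Rbar_sup.
  destruct (excluded_middle_informative (E PInf)) as [p|p].
  - apply H; auto.
  - apply Rsup_lub. intros r Hr; apply H; auto.
Qed.

Lemma Rbar_inf_lb (E : Rbar -> Prop) x : E x -> Rbar_le (Rbar_inf E) x.
Proof.
  intro H. unfold Rbar_inf.
  rewrite <- (Rbar_opp_opp x). apply Rbar_opp_le.
  apply Rbar_sup_ub. rewrite Rbar_opp_opp; auto.
Qed.

Lemma Rbar_inf_glb (E : Rbar -> Prop) l : (forall x, E x -> Rbar_le l x) -> Rbar_le l (Rbar_inf E).
Proof.
  intro H. unfold Rbar_inf.
  rewrite <- (Rbar_opp_opp l). apply Rbar_opp_le.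
  apply Rbar_sup_lub. intros y Hy.
  rewrite <- (Rbar_opp_opp y). apply Rbar_opp_le. apply H; auto.
Qed.

Definition Rbar_scal (c : R) (x : Rbar) : Rbar :=
  match x with Fin r => Fin (c * r) | PInf => PInf | MInf => MInf end.

Lemma Rbar_scal_le c x y : 0 < c -> Rbar_le x y -> Rbar_le (Rbar_scal c x) (Rbar_scal c y).
Proof. intros Hc; destruct x, y; simpl; auto. intros; apply Rmult_le_compat_l; lra. Qed.

Lemma Rbar_scal_inv c x : 0 < c -> Rbar_scal c (Rbar_scal (/ c) x) = x.
Proof. intros Hc; destruct x; simpl; auto. f_equal. field. lra. Qed.

Lemma Rbar_scal_inv' c x : 0 < c -> Rbar_scal (/ c) (Rbar_scal c x) = x.
Proof. intros Hc; destruct x; simpl; auto. f_equal. field. lra. Qed.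

Lemma Rbar_nmul_scal m x : (1 <= m)%nat -> Rbar_nmul m x = Rbar_scal (INR m) x.
Proof. intros Hm; destruct m; [lia|]. destruct x; reflexivity. Qed.

Lemma limsup_le (a b : nat -> R) (m : nat) : (1 <= m)%nat ->
  (forall n, (1 <= n)%nat -> a n <= INR m * b (m * n)%nat) ->
  Rbar_le (limsup a) (Rbar_nmul m (limsup b)).
Proof.
  intros Hm Hab. rewrite Rbar_nmul_scal by auto.
  assert (Hc : 0 < INR m) by (apply lt_0_INR; lia).
  set (c := INR m) in *.
  set (l := limsup a).
  rewrite <- (Rbar_scal_inv c l) by auto.
  apply Rbar_scal_le; auto.
  unfold limsup. apply Rbar_inf_glb.
  intros v [N ->].
  rewrite <- (Rbar_scal_inv' c (Rsup _)) by auto.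
  apply Rbar_scal_le; [apply Rinv_0_lt_compat; auto|].
  apply Rbar_le_trans with (Rsup (fun r => exists n, (S N <= n)%nat /\ r = a n)).
  - unfold l, limsup. apply Rbar_inf_lb. eauto.
  - apply Rsup_lub. intros r [n [Hn ->]].
    apply Rbar_le_trans with (Fin (c * b (m * n)%nat)).
    + simpl. apply Hab. lia.
    + change (Fin (c * b (m * n)%nat)) with (Rbar_scal c (Fin (b (m*n)%nat))).
      apply Rbar_scal_le; auto. apply Rsup_ub. exists (m * n)%nat. split; auto. nia.
Qed.
Open Scope R_scope.

Ltac seteq := apply functional_extensionality; intro; apply propositional_extensionality.

Section M.
Context {X : Type}.
Implicit Types (S : (X -> Prop) -> Prop) (mu : (X -> Prop) -> R).

Lemma S_True S : sigma_algebra S -> S (fun _ => True).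
Proof. intros [H _]; auto. Qed.

Lemma S_compl S A : sigma_algebra S -> S A -> S (fun x => ~ A x).
Proof. intros [_ [H _]] HA; apply (H A HA). Qed.

Lemma S_False S : sigma_algebra S -> S (fun _ => False).
Proof.
  intros HS. replace (fun _ : X => False) with (fun x : X => ~ (fun _ : X => True) x).
  - apply S_compl; auto. apply S_True; auto.
  - seteq. tauto.
Qed.

Lemma S_union S A B : sigma_algebra S -> S A -> S B -> S (fun x => A x \/ B x).
Proof.
  intros HS HA HB. destruct HS as [_ [_ H]].
  replace (fun x => A x \/ B x) with (big_union (fun n => match n with O => A | _ => B end)).
  - apply H. intros [|n]; auto.
  - seteq. unfold big_union. split.
    + intros [[|n] Hn]; auto.
    + intros [H1|H1]; [exists O|exists 1%nat]; auto.
Qed.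

Lemma S_inter S A B : sigma_algebra S -> S A -> S B -> S (fun x => A x /\ B x).
Proof.
  intros HS HA HB.
  replace (fun x => A x /\ B x) with (fun x => ~ (fun y => ~ A y \/ ~ B y) x).
  - apply (S_compl S (fun y => ~ A y \/ ~ B y)); auto. apply S_union; auto; apply S_compl; auto.
  - seteq. destruct (classic (A x)); destruct (classic (B x)); tauto.
Qed.

Lemma mu_empty S mu : sigma_algebra S -> prob_measure S mu -> mu (fun _ => False) = 0.
Proof.
  intros HS [H1 [H2 H3]].
  assert (Hs := H3 (fun _ => fun _ => False) (fun _ => S_False S HS) (fun i j x _ h _ => h)).
  replace (big_union (fun _ : nat => fun _ : X => False)) with (fun _ : X => False) in Hs
    by (seteq; unfold big_union; split; [tauto| intros [_ h]; auto]).
  set (c := mu (fun _ => False)) in *.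
  assert (Hc : 0 <= c) by (apply H2; apply S_False; auto).
  destruct (Rle_lt_or_eq_dec 0 c Hc) as [Hp|]; [|auto].
  exfalso. destruct (Hs c Hp) as [N HN].
  specialize (HN (Datatypes.S N) ltac:(lia)). rewrite sum_cte in HN. unfold Rdist in HN.
  rewrite S_INR, S_INR in HN.
  assert (0 <= INR N) by apply pos_INR.
  rewrite Rabs_right in HN; nra.
Qed.

Lemma mu_nonneg S mu A : prob_measure S mu -> S A -> 0 <= mu A.
Proof. intros [_ [H _]] HA; auto. Qed.

Lemma mu_add S mu A B : sigma_algebra S -> prob_measure S mu -> S A -> S B ->
  (forall x, A x -> B x -> False) -> mu (fun x => A x \/ B x) = mu A + mu B.
Proof.
  intros HS Hmu HA HB Hd.
  pose proof (mu_empty S mu HS Hmu) as He.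
  destruct Hmu as [H1 [H2 H3]].
  set (F := fun n : nat => match n with O => A | 1%nat => B | _ => fun _ : X => False end).
  assert (Hs := H3 F).
  replace (big_union F) with (fun x => A x \/ B x) in Hs.
  2:{ seteq. unfold big_union, F. split.
      - intros [H|H]; [exists O|exists 1%nat]; auto.
      - intros [[|[|n]] Hn]; auto; contradiction. }
  assert (Hs' : infinite_sum (fun n => mu (F n)) (mu (fun x => A x \/ B x))).
  { apply Hs.
    - intros [|[|n]]; simpl; auto. apply S_False; auto.
    - intros [|[|i]] [|[|j]] x Hij Hi Hj; simpl in *; try lia; try contradiction; eauto. }
  apply (uniqueness_sum (fun n => mu (F n))); auto.
  intros eps Heps. exists 1%nat. intros n Hn.
  assert (sum_f_R0 (fun n => mu (F n)) n = mu A + mu B).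
  { induction n as [|n IH]; [lia|].
    destruct n as [|n]; simpl; [reflexivity|].
    simpl in IH. rewrite IH by lia. unfold F. rewrite He. ring. }
  rewrite H. unfold Rdist. rewrite Rminus_diag, Rabs_R0; auto.
Qed.

Lemma mu_le1 S mu A : sigma_algebra S -> prob_measure S mu -> S A -> mu A <= 1.
Proof.
  intros HS Hmu HA.
  assert (E : mu (fun x => A x \/ ~ A x) = mu A + mu (fun x => ~ A x)).
  { apply (mu_add S mu); auto. apply S_compl; auto. }
  replace (fun x => A x \/ ~ A x) with (fun _ : X => True) in E by (seteq; split; auto; intros _; apply classic).
  destruct Hmu as [H1 [H2 _]]. rewrite H1 in E.
  assert (0 <= mu (fun x => ~ A x)) by (apply H2; apply S_compl; auto). lra.
Qed.

Fixpoint union_l (L : list (X -> Prop)) : X -> Prop :=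
  match L with [] => fun _ => False | A :: L => fun x => A x \/ union_l L x end.

Fixpoint PD (L : list (X -> Prop)) : Prop :=
  match L with [] => True | A :: L => (forall B, In B L -> forall x, A x -> B x -> False) /\ PD L end.

Lemma union_l_In L x : union_l L x -> exists B, In B L /\ B x.
Proof. induction L; simpl; [tauto|]. intros [H|H]; eauto. destruct (IHL H) as [B [? ?]]; eauto. Qed.

Lemma In_union_l L B x : In B L -> B x -> union_l L x.
Proof. induction L; simpl; [tauto|]. intros [->|H] Hb; auto. Qed.

Lemma S_union_l S L : sigma_algebra S -> Forall S L -> S (union_l L).
Proof. intros HS; induction 1; simpl; [apply S_False; auto | apply S_union; auto]. Qed.

Definition sumL {T} (f : T -> R) (L : list T) : R := fold_right (fun a acc => f a + acc) 0 L.

Lemma g_subadd g a b : in_G0 g -> 0 <= a -> 0 <= b -> a + b <= 1 -> g (a + b) <= g a + g b.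
Proof.
  intros [Hc [H0 _]] Ha Hb Hab.
  destruct (Req_dec (a + b) 0) as [Z|Z].
  { assert (a = 0) by lra. assert (b = 0) by lra. subst. rewrite Rplus_0_r, H0. lra. }
  set (t := a / (a + b)).
  assert (Ht : 0 <= t <= 1).
  { unfold t; split. apply Rmult_le_pos; [lra| apply Rlt_le, Rinv_0_lt_compat; lra].
    apply Rmult_le_reg_r with (a+b); [lra|]. field_simplify; lra. }
  assert (E1 := Hc (a+b) 0 t ltac:(lra) ltac:(lra) Ht).
  assert (E2 := Hc (a+b) 0 (1 - t) ltac:(lra) ltac:(lra) ltac:(lra)).
  replace (t * (a + b) + (1 - t) * 0) with a in E1 by (unfold t; field; auto).
  replace ((1 - t) * (a + b) + (1 - (1 - t)) * 0) with b in E2 by (unfold t; field; auto).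
  rewrite H0 in E1, E2. lra.
Qed.

Lemma g_union_l S mu g L : sigma_algebra S -> prob_measure S mu -> in_G0 g -> Forall S L -> PD L ->
  g (mu (union_l L)) <= Hg g mu L.
Proof.
  intros HS Hmu Hg0. induction 1 as [|A L HA HL IH]; simpl.
  - rewrite (mu_empty S mu HS Hmu). destruct Hg0 as [_ [H0 _]]. lra.
  - intros [Hd HPD].
    assert (HU : S (union_l L)) by (apply S_union_l; auto).
    assert (E : mu (fun x => A x \/ union_l L x) = mu A + mu (union_l L)).
    { apply (mu_add S mu); auto. intros x Ha Hu. destruct (union_l_In L x Hu) as [B [? ?]]. eapply Hd; eauto. }
    assert (Hle := mu_le1 S mu _ HS Hmu (S_union S A (union_l L) HS HA HU)).
    rewrite E in *.
    eapply Rle_trans. apply g_subadd; [exact Hg0|exact (mu_nonneg S mu A Hmu HA)|exact (mu_nonneg S mu _ Hmu HU)|exact Hle].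
    specialize (IH HPD). unfold Hg in *. lra.
Qed.

End M.

Section N.
Context {X : Type}.
Implicit Types (S : (X -> Prop) -> Prop) (mu : (X -> Prop) -> R).

Lemma sumL_le_in {T} (f h : T -> R) L : (forall a, In a L -> f a <= h a) -> sumL f L <= sumL h L.
Proof. induction L; simpl; intros H; [lra|]. specialize (IHL (fun a h => H a (or_intror h))). specialize (H a (or_introl eq_refl)). lra. Qed.

Lemma sumL_zero_in {T} (f : T -> R) L : (forall a, In a L -> f a = 0) -> sumL f L = 0.
Proof. induction L; simpl; intros H; [lra|]. rewrite IHL by auto. rewrite H by auto. ring. Qed.

Lemma sumL_plus {T} (f h : T -> R) L : sumL (fun a => f a + h a) L = sumL f L + sumL h L.
Proof. induction L; simpl; [ring|]. rewrite IHL. ring. Qed.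

Lemma sumL_swap {T U} (F : T -> U -> R) L M :
  sumL (fun a => sumL (fun b => F a b) M) L = sumL (fun b => sumL (fun a => F a b) L) M.
Proof.
  induction L; simpl.
  - symmetry; apply sumL_zero_in; auto.
  - rewrite IHL. rewrite <- sumL_plus. reflexivity.
Qed.

Lemma sumL_map {T U} (f : U -> R) (h : T -> U) L : sumL f (map h L) = sumL (fun a => f (h a)) L.
Proof. induction L; simpl; auto. rewrite IHL; auto. Qed.

Lemma Hg_sumL g mu L : Hg g mu L = sumL (fun A => g (mu A)) L.
Proof. reflexivity. Qed.

Definition cover (L : list (X -> Prop)) := forall x, exists A, In A L /\ A x.
Definition refines (R Q : list (X -> Prop)) :=
  forall B, In B R -> exists A, In A Q /\ forall x, B x -> A x.

Lemma PD_map_inter (A : X -> Prop) L : PD L -> PD (map (fun (B : X -> Prop) x => A x /\ B x) L).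
Proof.
  induction L; simpl; auto. intros [Hd Hp]. split; auto.
  intros C HC. apply in_map_iff in HC. destruct HC as [B [<- HB]].
  intros x [_ H1] [_ H2]. eapply Hd; eauto.
Qed.

Lemma col_sum S mu g Q B : sigma_algebra S -> prob_measure S mu -> in_G0 g -> PD Q ->
  (exists A0, In A0 Q /\ forall x, B x -> A0 x) ->
  sumL (fun A => g (mu (fun x => A x /\ B x))) Q = g (mu B).
Proof.
  intros HS Hmu [_ [H0 _]].
  pose proof (mu_empty S mu HS Hmu) as He.
  induction Q as [|A Q IH]; simpl.
  - intros _ [A0 [[] _]].
  - intros [Hd Hp] [A0 [HA0 Hsub]].
    destruct HA0 as [<-|HA0].
    + replace (fun x => A x /\ B x) with B by (seteq; intuition).
      rewrite sumL_zero_in; [ring|].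
      intros A' HA'. replace (fun x => A' x /\ B x) with (fun _ : X => False).
      * rewrite He; auto.
      * seteq. split; [tauto|]. intros [h1 h2]. eapply Hd; eauto.
    + replace (fun x => A x /\ B x) with (fun _ : X => False).
      * rewrite He, H0, IH; eauto. ring.
      * seteq. split; [tauto|]. intros [h1 h2]. eapply Hd; eauto.
Qed.

Lemma Hg_refine S mu g Q R : sigma_algebra S -> prob_measure S mu -> in_G0 g ->
  Forall S Q -> PD Q -> Forall S R -> PD R -> cover R -> refines R Q ->
  Hg g mu Q <= Hg g mu R.
Proof.
  intros HS Hmu Hg0 HQ PQ HR PR CR RRQ.
  rewrite !Hg_sumL.
  apply Rle_trans with (sumL (fun A => sumL (fun B => g (mu (fun x => A x /\ B x))) R) Q).
  - apply sumL_le_in. intros A HA.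
    assert (SA : S A) by (rewrite Forall_forall in HQ; auto).
    replace (mu A) with (mu (union_l (map (fun B x => A x /\ B x) R))).
    + replace (sumL (fun B => g (mu (fun x => A x /\ B x))) R) with (Hg g mu (map (fun (B : X -> Prop) x => A x /\ B x) R))
        by (rewrite Hg_sumL, sumL_map; reflexivity).
      apply (g_union_l S mu); auto.
      * rewrite Forall_forall in *. intros C HC. apply in_map_iff in HC. destruct HC as [B [<- HB]].
        apply S_inter; auto.
      * apply PD_map_inter; auto.
    + f_equal. seteq. split.
      * intros Hu. destruct (union_l_In _ _ Hu) as [C [HC Hx]].
        apply in_map_iff in HC. destruct HC as [B [<- HB]]. apply Hx.
      * intros Ha. destruct (CR x) as [B [HB Hb]].
        apply In_union_l with (fun x => A x /\ B x); auto.
        apply in_map_iff. eauto.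
  - rewrite sumL_swap. apply sumL_le_in. intros B HB.
    rewrite (col_sum S mu); auto. lra.
Qed.

End N.

Section J.
Context {X : Type}.
Implicit Types (S : (X -> Prop) -> Prop) (mu : (X -> Prop) -> R).

Lemma In_join C (Q R : list (X -> Prop)) :
  In C (join Q R) <-> exists A B, In A Q /\ In B R /\ C = (fun x => A x /\ B x).
Proof.
  unfold join. rewrite in_flat_map. split.
  - intros [A [HA HC]]. apply in_map_iff in HC. destruct HC as [B [<- HB]]. eauto.
  - intros [A [B [HA [HB ->]]]]. exists A. split; auto. apply in_map_iff. eauto.
Qed.

Lemma Forall_join S Q R : sigma_algebra S -> Forall S Q -> Forall S R -> Forall S (join Q R).
Proof.
  intros HS HQ HR. rewrite Forall_forall in *. intros C HC.
  apply In_join in HC. destruct HC as [A [B [HA [HB ->]]]]. apply S_inter; auto.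
Qed.

Lemma PD_app (l1 l2 : list (X -> Prop)) : PD l1 -> PD l2 ->
  (forall a b, In a l1 -> In b l2 -> forall x, a x -> b x -> False) -> PD (l1 ++ l2).
Proof.
  induction l1 as [|a l1 IH]; simpl; auto.
  intros [Hd Hp] H2 Hc. split.
  - intros B HB x Ha Hb. apply in_app_or in HB. destruct HB as [HB|HB].
    + eapply Hd; eauto.
    + eapply Hc; eauto.
  - apply IH; auto. intros; eapply Hc; eauto.
Qed.

Lemma PD_join (Q R : list (X -> Prop)) : PD Q -> PD R -> PD (join Q R).
Proof.
  induction Q as [|A Q IH]; simpl; auto.
  intros [Hd Hp] HR. change (PD (map (fun B x => A x /\ B x) R ++ join Q R)).
  apply PD_app; auto.
  - apply PD_map_inter; auto.
  - intros a b Ha Hb x H1 H2. apply in_map_iff in Ha. destruct Ha as [B [<- HB]].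
    apply In_join in Hb. destruct Hb as [A' [B' [HA' [HB' ->]]]].
    destruct H1, H2. eapply Hd; eauto.
Qed.

Lemma cover_join (Q R : list (X -> Prop)) : cover Q -> cover R -> cover (join Q R).
Proof.
  intros HQ HR x. destruct (HQ x) as [A [HA Ha]]. destruct (HR x) as [B [HB Hb]].
  exists (fun x => A x /\ B x). split; auto. apply In_join. eauto 7.
Qed.

Definition pres S (f : X -> X) := forall A, S A -> S (preimage f A).

Lemma Forall_map_pre S (h : X -> X) P : pres S h -> Forall S P -> Forall S (map (preimage h) P).
Proof. intros Hh HP. rewrite Forall_forall in *. intros C HC. apply in_map_iff in HC.
  destruct HC as [A [<- HA]]. auto. Qed.

Lemma PD_map_pre (h : X -> X) P : PD P -> PD (map (preimage h) P).
Proof.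
  induction P as [|A P IH]; simpl; auto. intros [Hd Hp]; split; auto.
  intros C HC. apply in_map_iff in HC. destruct HC as [B [<- HB]].
  unfold preimage. intros x H1 H2. eapply Hd; eauto.
Qed.

Lemma cover_map_pre (h : X -> X) P : cover P -> cover (map (preimage h) P).
Proof.
  intros HP x. destruct (HP (h x)) as [A [HA Ha]]. exists (preimage h A).
  split; auto. apply in_map; auto.
Qed.

Lemma iter_join_props S (f : X -> X) P n : sigma_algebra S ->
  (forall k, pres S (iter_fun k f)) -> Forall S P -> PD P -> cover P ->
  Forall S (iter_join f P n) /\ PD (iter_join f P n) /\ cover (iter_join f P n).
Proof.
  intros HS Hf HP PP CP. induction n as [|n [IH1 [IH2 IH3]]]; simpl.
  - split; [constructor; [apply S_True; auto| constructor]|]. split.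
    + simpl. tauto.
    + intros x. exists (fun _ => True). simpl; auto.
  - split; [|split].
    + apply Forall_join; auto. apply Forall_map_pre; auto.
    + apply PD_join; auto. apply PD_map_pre; auto.
    + apply cover_join; auto. apply cover_map_pre; auto.
Qed.

Lemma pres_iter S f k : pres S f -> pres S (iter_fun k f).
Proof.
  intros Hf. induction k as [|k IH]; intros A HA.
  - exact HA.
  - exact (IH _ (Hf A HA)).
Qed.

Lemma refines_refl (L : list (X -> Prop)) : refines L L.
Proof. intros B HB. eauto. Qed.

Lemma refines_trans (L1 L2 L3 : list (X -> Prop)) : refines L1 L2 -> refines L2 L3 -> refines L1 L3.
Proof.
  intros H12 H23 B HB. destruct (H12 B HB) as [A [HA HBA]]. destruct (H23 A HA) as [C [HC HAC]]. eauto.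
Qed.

Lemma refines_join_l (Q R : list (X -> Prop)) : refines (join Q R) Q.
Proof. intros C HC. apply In_join in HC. destruct HC as [A [B [HA [HB ->]]]]. exists A. split; auto. tauto. Qed.

Lemma refines_join_r (Q R : list (X -> Prop)) : refines (join Q R) R.
Proof. intros C HC. apply In_join in HC. destruct HC as [A [B [HA [HB ->]]]]. exists B. split; auto. tauto. Qed.

Lemma refines_join_intro (W Q R : list (X -> Prop)) : refines W Q -> refines W R -> refines W (join Q R).
Proof.
  intros H1 H2 B HB. destruct (H1 B HB) as [A [HA HBA]]. destruct (H2 B HB) as [C [HC HBC]].
  exists (fun x => A x /\ C x). split; auto. apply In_join; eauto 7.
Qed.

Lemma iter_join_mono (f : X -> X) P k k' : (k <= k')%nat -> refines (iter_join f P k') (iter_join f P k).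
Proof.
  induction 1.
  - apply refines_refl.
  - eapply refines_trans; [|exact IHle]. apply refines_join_l.
Qed.

Lemma iter_add (f : X -> X) a b x : iter_fun (a + b) f x = iter_fun a f (iter_fun b f x).
Proof. induction a; simpl; auto. rewrite IHa; auto. Qed.

Lemma iter_mul (f : X -> X) m n x : iter_fun n (iter_fun m f) x = iter_fun (m * n) f x.
Proof.
  induction n as [|n IH]; simpl.
  - rewrite Nat.mul_0_r. reflexivity.
  - rewrite IH, <- iter_add. f_equal. lia.
Qed.

Lemma refines_pow (f : X -> X) P m n : (1 <= m)%nat ->
  refines (iter_join f P (m * n)) (iter_join (iter_fun m f) P n).
Proof.
  intros Hm. induction n as [|n IH].
  - rewrite Nat.mul_0_r. apply refines_refl.
  - simpl iter_join at 2. apply refines_join_intro.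
    + eapply refines_trans; [|exact IH]. apply iter_join_mono. lia.
    + replace (iter_fun n (iter_fun m f)) with (iter_fun (m * n) f)
        by (apply functional_extensionality; intro; symmetry; apply iter_mul).
      eapply refines_trans.
      * apply (iter_join_mono f P (Datatypes.S (m * n))). lia.
      * apply refines_join_r.
Qed.

Lemma PD_of_index (L : list (X -> Prop)) :
  (forall i j x, (i < j < length L)%nat ->
     nth i L (fun _ => False) x -> nth j L (fun _ => False) x -> False) -> PD L.
Proof.
  induction L as [|A L IH]; simpl; auto. intros H. split.
  - intros B HB x Ha Hb. destruct (In_nth L B (fun _ => False) HB) as [j [Hj Hn]].
    apply (H O (Datatypes.S j) x); simpl; auto; [lia| rewrite Hn; auto].
  - apply IH. intros i j x Hij Hi Hj. apply (H (Datatypes.S i) (Datatypes.S j) x); simpl; auto. lia.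
Qed.

End J.

Theorem mainTheorem16 (X : Type) (S : (X -> Prop) -> Prop) (mu : (X -> Prop) -> R)
  (T : X -> X) (m : nat) :
  lebesgue_space S mu -> automorphism S mu T -> (1 <= m)%nat ->
  forall g : R -> R, in_G0 g ->
  Rbar_le (hg S g mu (iter_fun m T)) (Rbar_nmul m (hg S g mu T)).
Proof.
  intros [HS [Hmu _]] [Tinv [_ [_ [HT _]]]] Hm g Hg0.
  assert (PT : pres S T) by (intros A HA; apply (HT A HA)).
  assert (PTk : forall k, pres S (iter_fun k T)) by (intros; apply pres_iter; auto).
  assert (PTm : forall k, pres S (iter_fun k (iter_fun m T))) by (intros; apply pres_iter, pres_iter; auto).
  unfold hg at 1. apply Rbar_sup_lub. intros v [P [HP ->]].
  destruct HP as [FP [CP IP]].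
  assert (PP := PD_of_index P IP).
  assert (CP' : cover P) by exact CP.
  apply Rbar_le_trans with (Rbar_nmul m (hg_part g mu T P)).
  - unfold hg_part. apply limsup_le; auto.
    intros n Hn.
    destruct (iter_join_props S T P (m * n) HS PTk FP PP CP') as [F1 [D1 C1]].
    destruct (iter_join_props S (iter_fun m T) P n HS PTm FP PP CP') as [F2 [D2 C2]].
    assert (H := Hg_refine S mu g _ _ HS Hmu Hg0 F2 D2 F1 D1 C1 (refines_pow T P m n Hm)).
    assert (Hn' : 0 < INR n) by (apply lt_0_INR; lia).
    assert (Hm' : 0 < INR m) by (apply lt_0_INR; lia).
    rewrite mult_INR.
    replace (INR m * (Hg g mu (iter_join T P (m * n)) / (INR m * INR n)))
      with (Hg g mu (iter_join T P (m * n)) / INR n) by (field; lra).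
    unfold Rdiv. apply Rmult_le_compat_r; auto. apply Rlt_le, Rinv_0_lt_compat; auto.
  - rewrite !Rbar_nmul_scal by auto. apply Rbar_scal_le; [apply lt_0_INR; lia|].
    apply Rbar_sup_ub. exists P. split; auto. split; auto.
Qed.
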